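(* Consider FedProx, as described in the context, and a round $t$ whose step size satisfies $\gamma_t\le1/\alpha$. Assume that the bounded variance, bounded stochastic gradient norm and $L$-smoothness assumptions hold. Then for every client $i$ and every $k\in\{0,\dots,E\}$, $$\mathbb{E}\|\mathbf{w}^i_{t,k}-\overline{\mathbf{w}}_{t,0}\|^2\le\gamma_t^2E^2G^2.$$
   Context: Setting: there are $C$ clients with weights $p_i\ge0$ satisfying $\sum_ip_i=1$, local objectives $F_i:\mathbb{R}^D\to\mathbb{R}$, and global objective $F=\sum_ip_iF_i$. FedProx with $\alpha>0$, $E\ge1$ local steps and step sizes $\gamma_t$, with all clients participating: in round $t$, $\mathbf{w}^i_{t,0}=\overline{\mathbf{w}}_{t,0}$ and, for $k=0,\dots,E-1$, $$\mathbf{w}^i_{t,k+1}=(1-\alpha\gamma_t)\mathbf{w}^i_{t,k}+\alpha\gamma_t\overline{\mathbf{w}}_{t,0}-\gamma_tg_i(\mathbf{w}^i_{t,k}),$$ with stochastic gradients $g_i$ of $F_i$ sampled independently given the past. Also $\overline{\mathbf{w}}_{t,k}=\sum_ip_i\mathbf{w}^i_{t,k}$ and $\overline{\mathbf{w}}_{t+1,0}=\overline{\mathbf{w}}_{t,E}$. Assumptions: - Unbiasedness: $\mathbb{E}\,g_i(\mathbf{w}^i_{t,k})=\nabla F_i(\mathbf{w}^i_{t,k})$. - Variance: $\mathbb{E}\|g_i(\mathbf{w}^i_{t,k})-\nabla F_i(\mathbf{w}^i_{t,k})\|^2\le\sigma^2$. - Bounded second moment: $\mathbb{E}\|g_i(\mathbf{w}^i_{t,k})\|^2\le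 G^2$ for all $i,t,k$. - Smoothness: each $\nabla F_i$ is $L$-Lipschitz. $\mathbb{E}$ is total expectation. *)

(* Defs.v *)
From HB Require Import structures.
From mathcomp Require Import all_boot all_order all_algebra.
From mathcomp Require Import all_classical all_reals all_analysis.
Set Implicit Arguments. Unset Strict Implicit. Unset Printing Implicit Defensive.
Import Order.TTheory GRing.Theory Num.Theory.
Local Open Scope ring_scope.

Definition sqnorm {R : realType} {D : nat} (v : 'rV[R]_D) : R :=
  \sum_(j < D) (v 0 j) ^+ 2.

Definition dotp {R : realType} {D : nat} (u v : 'rV[R]_D) : R :=
  \sum_(j < D) u 0 j * v 0 j.

Definition wavg {R : realType} {C D : nat} {Omega : Type}
  (p : 'I_C -> R) (w : 'I_C -> nat -> nat -> Omega -> 'rV[R]_D)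
  (t k : nat) (om : Omega) : 'rV[R]_D :=
  \sum_(i < C) p i *: w i t k om.

(* Main.v *)
Require Import Defs.
From HB Require Import structures.
From mathcomp Require Import all_boot all_order all_algebra.
From mathcomp Require Import all_classical all_reals all_analysis.
Import Order.TTheory GRing.Theory Num.Theory.
From mathcomp Require Import measurable_realfun ring lra.
Local Open Scope ring_scope.


Lemma cs_sum (R : realType) (n : nat) (x : 'I_n -> R) :
  (\sum_(j < n) x j) ^+ 2 <= n%:R * \sum_(j < n) x j ^+ 2.
Proof.
set S1 := \sum_(j < n) x j; set S2 := \sum_(j < n) x j ^+ 2.
have E1 : forall i, \sum_(j < n) (x i - x j) ^+ 2 = n%:R * x i ^+ 2 + S2 - 2 * x i * S1.
  move=> i.
  have hh : forall j, (x i - x j) ^+ 2 = x i ^+ 2 + x j ^+ 2 - 2 * x i * x j by move=> j; ring.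
  under eq_bigr do rewrite hh.
  rewrite sumrB big_split /= sumr_const card_ord /S1 mulr_sumr.
  by rewrite [n%:R * _]mulr_natl.
have E : \sum_(i < n) \sum_(j < n) (x i - x j) ^+ 2 = 2 * (n%:R * S2 - S1 ^+ 2).
  under eq_bigr do rewrite E1.
  rewrite sumrB big_split /= sumr_const card_ord.
  rewrite -mulr_sumr -/S2 -mulr_suml -/S1 -[S2 *+ n]mulr_natl -mulr_sumr -/S1; ring.
have H : 0 <= \sum_(i < n) \sum_(j < n) (x i - x j) ^+ 2.
  by apply: sumr_ge0 => i _; apply: sumr_ge0 => j _; exact: sqr_ge0.
rewrite E in H; lra.
Qed.

Lemma meas_sum d (T : measurableType d) (R : realType) (n : nat) (f : 'I_n -> T -> R) :
  (forall j, measurable_fun setT (f j)) ->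
  measurable_fun setT (fun x => \sum_(j < n) f j x).
Proof.
elim: n f => [|n IH] f hf.
  have -> : (fun x => \sum_(j < 0) f j x) = cst 0 by apply: funext => x; rewrite big_ord0.
  exact: measurable_cst.
have -> : (fun x => \sum_(j < n.+1) f j x) =
   (fun x => \sum_(j < n) f (widen_ord (leqnSn n) j) x) \+ f ord_max.
  by apply: funext => x; rewrite big_ord_recr.
apply: measurable_funD; last exact: hf.
exact: IH.
Qed.

Lemma EFge0 (R : realType) (x : R) : 0 <= x -> (0 <= x%:E)%E.
Proof. by []. Qed.

Lemma sqnorm_ge0 (R : realType) (D : nat) (v : 'rV[R]_D) : 0 <= sqnorm v.
Proof. by rewrite /sqnorm; apply: sumr_ge0 => l _; exact: sqr_ge0. Qed.

Theorem lemma2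
  (R : realType) (d : measure_display) (Omega : measurableType d)
  (P : probability Omega R) (C D : nat)
  (p : 'I_C -> R) (F : 'I_C -> 'rV[R]_D -> R) (gradF : 'I_C -> 'rV[R]_D -> 'rV[R]_D)
  (alpha : R) (nE : nat) (gamma : nat -> R) (L sigma G : R)
  (w : 'I_C -> nat -> nat -> Omega -> 'rV[R]_D)
  (g : 'I_C -> nat -> nat -> Omega -> 'rV[R]_D)
  (* client weights *)
  (hp0 : forall i, 0 <= p i) (hp1 : \sum_(i < C) p i = 1)
  (* parameters *)
  (halpha : 0 < alpha) (hE : (1 <= nE)%N) (hgamma : forall t, 0 < gamma t)
  (* gradF i is the gradient of F i *)
  (hgrad : forall i x v, is_derive x v (F i) (dotp (gradF i x) v))
  (* L-smoothness *)
  (hL : forall i x y, sqnorm (gradF i x - gradF i y) <= L ^+ 2 * sqnorm (x - y))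
  (hL0 : 0 <= L)
  (* FedProx dynamics, all clients participating *)
  (hinit : forall i t om, w i t 0%N om = wavg p w t 0%N om)
  (hstep : forall i t k om, (k < nE)%N ->
     w i t k.+1 om = (1 - alpha * gamma t) *: w i t k om
                     + (alpha * gamma t) *: wavg p w t 0%N om
                     - gamma t *: g i t k om)
  (hround : forall t om, wavg p w t.+1 0%N om = wavg p w t nE om)
  (* stochastic gradients are random vectors *)
  (hgmeas : forall i t k (j : 'I_D), measurable_fun setT (fun om => g i t k om 0 j))
  (* bounded variance *)
  (hvar : forall i t k,
     ('E_P[fun om => sqnorm (g i t k om - gradF i (w i t k om))] <= (sigma ^+ 2)%:E)%E)
  (* bounded second moment *)
  (hG : forall i t k, ('E_P[fun om => sqnorm (g i t k om)] <= (G ^+ 2)%:E)%E)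
  (t : nat) (hgt : gamma t <= 1 / alpha)
  (i : 'I_C) (k : nat) (hk : (k <= nE)%N) :
  ('E_P[fun om => sqnorm (w i t k om - wavg p w t 0%N om)]
     <= (gamma t ^+ 2 * (nE%:R) ^+ 2 * G ^+ 2)%:E)%E.

Proof.
set a := 1 - alpha * gamma t.
have hag : alpha * gamma t <= 1.
  have := hgt; rewrite -(ler_pM2l halpha) mul1r mulfV ?gt_eqF //.
have hag0 : 0 < alpha * gamma t by apply: mulr_gt0.
have ha0 : 0 <= a by rewrite /a subr_ge0.
have ha1 : a <= 1 by rewrite /a lerBlDr lerDl ltW.
have cf : forall m, (m <= nE)%N -> forall om l,
    (w i t m om - wavg p w t 0%N om) 0 l =
    - gamma t * \sum_(j < m) a ^+ (m - j.+1) * g i t j om 0 l.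
  elim => [|n0 IH] hn0 om l.
    by rewrite big_ord0 hinit subrr mxE mulr0.
  have IH' := IH (ltnW hn0) om l; rewrite !mxE in IH'.
  rewrite hstep // !mxE big_ord_recr /= subnn expr0 mul1r.
  set Sk := \sum_(j < n0) a ^+ (n0 - j.+1) * g i t j om 0 l.
  have -> : \sum_(j < n0) a ^+ (n0.+1 - (widen_ord (leqnSn n0) j).+1) * g i t j om 0 l
      = a * Sk.
    rewrite /Sk mulr_sumr; apply: eq_bigr => j _.
    by rewrite /= subSS -(subnSK (ltn_ord j)) exprS mulrA.
  have -> : w i t n0 om 0 l = wavg p w t 0%N om 0 l + - gamma t * Sk.
    by rewrite -IH'; ring.
  rewrite /a; ring.
have mcoord : forall l, measurable_fun setT
    (fun om => (w i t k om - wavg p w t 0%N om) 0 l).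
  move=> l.
  have -> : (fun om => (w i t k om - wavg p w t 0%N om) 0 l) =
     (fun om => - gamma t * \sum_(j < k) a ^+ (k - j.+1) * g i t j om 0 l).
    by apply: funext => om; rewrite cf.
  apply: (measurable_funM (f := cst (- gamma t))); first exact: measurable_cst.
  apply: meas_sum => j.
  apply: (measurable_funM (f := cst (a ^+ (k - j.+1)))); first exact: measurable_cst.
  exact: hgmeas.
have mu : measurable_fun setT (fun om => sqnorm (w i t k om - wavg p w t 0%N om)).
  rewrite /sqnorm; apply: meas_sum => l; apply: measurable_funX; exact: mcoord.
have mg : forall j, measurable_fun setT (fun om => sqnorm (g i t j om)).
  move=> j; rewrite /sqnorm; apply: meas_sum => l; apply: measurable_funX; exact: hgmeas.
have pb : forall om, sqnorm (w i t k om - wavg p w t 0%N om) <=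
    gamma t ^+ 2 * k%:R * \sum_(j < k) sqnorm (g i t j om).
  move=> om; rewrite /sqnorm.
  under eq_bigr do rewrite cf //.
  rewrite exchange_big /= mulr_sumr; apply: ler_sum => l _.
  rewrite exprMn sqrrN -mulrA ler_wpM2l ?sqr_ge0 //.
  apply: le_trans (cs_sum _ _ (fun j : 'I_k => a ^+ (k - j.+1) * g i t j om 0 l)) _.
  rewrite ler_wpM2l ?ler0n //; apply: ler_sum => j _.
  rewrite exprMn -[X in _ <= X]mul1r; apply: ler_wpM2r; first exact: sqr_ge0.
  by rewrite -exprM exprn_ile1.
have hc0 : 0 <= gamma t ^+ 2 * k%:R by rewrite mulr_ge0 ?sqr_ge0 ?ler0n.
rewrite unlock.
apply: (@le_trans _ _ (\int[P]_om ((gamma t ^+ 2 * k%:R)%:E *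
    \sum_(j < k) (sqnorm (g i t j om))%:E))%E).
  apply: ge0_le_integral => //.
  move=> om _. exact: sqnorm_ge0.
  - by apply/measurable_EFinP.
  - have -> : (fun om => ((gamma t ^+ 2 * k%:R)%:E *
        \sum_(j < k) (sqnorm (g i t j om))%:E)%E) =
        EFin \o (fun om => gamma t ^+ 2 * k%:R * \sum_(j < k) sqnorm (g i t j om)).
      by apply: funext => om /=; rewrite sumEFin EFinM.
    apply/measurable_EFinP.
    apply: (measurable_funM (f := cst (gamma t ^+ 2 * k%:R))); first exact: measurable_cst.
    exact: meas_sum.
  - by move=> om _; rewrite sumEFin -EFinM lee_fin.
have nS : forall om, [set: Omega]%classic om ->
    (0 <= \sum_(j < k) (sqnorm (g i t j om))%:E)%E.
  by move=> om _; apply: sume_ge0 => j _; exact: sqnorm_ge0.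
have mS : measurable_fun setT (fun om => (\sum_(j < k) (sqnorm (g i t j om))%:E)%E).
  have -> : (fun om => \sum_(j < k) (sqnorm (g i t j om))%:E)%E =
      EFin \o (fun om => \sum_(j < k) sqnorm (g i t j om)).
    by apply: funext => om /=; rewrite sumEFin.
  by apply/measurable_EFinP; exact: meas_sum.
have mj : forall j : 'I_k, measurable_fun setT (fun om => (sqnorm (g i t j om))%:E).
  by move=> j; apply/measurable_EFinP; exact: mg.
have nj : forall (j : 'I_k) om, [set: Omega]%classic om -> (0 <= (sqnorm (g i t j om))%:E)%E.
  by move=> j om _; exact: sqnorm_ge0.
rewrite ge0_integralZl //.
rewrite ge0_integral_sum //.
apply: (@le_trans _ _ ((gamma t ^+ 2 * k%:R)%:E * \sum_(j < k) (G ^+ 2)%:E)%E).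
  apply: lee_wpmul2l; first exact: hc0.
  apply: lee_sum => j _.
  by have := hG i t j; rewrite unlock.
rewrite sumEFin -EFinM lee_fin sumr_const card_ord.
have hkn : (k%:R : R) <= nE%:R by rewrite ler_nat.
have hk0 : (0 : R) <= k%:R by rewrite ler0n.
have hg2 : 0 <= gamma t ^+ 2 by exact: sqr_ge0.
have hG2 : 0 <= G ^+ 2 by exact: sqr_ge0.
rewrite -[G ^+ 2 *+ k]mulr_natr.
have hkk : (k%:R : R) ^+ 2 <= nE%:R ^+ 2 by rewrite ler_pXn2r ?nnegrE ?ler0n.
have -> : gamma t ^+ 2 * k%:R * (G ^+ 2 * k%:R) = (gamma t ^+ 2 * G ^+ 2) * k%:R ^+ 2 by ring.
have -> : gamma t ^+ 2 * nE%:R ^+ 2 * G ^+ 2 = (gamma t ^+ 2 * G ^+ 2) * nE%:R ^+ 2 by ring.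
by rewrite ler_wpM2l //; apply: mulr_ge0.
Qed.
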